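(* Let $n\ge1$ and let $(\rho,\alpha)$ satisfy either $\alpha\in(1,2)$ and $0\le\rho\le\frac{1-\theta(\alpha)}{1+\theta(\alpha)}$, or $\alpha\in[2,3]$ and $0\le\rho\le1$. Then $\mathbf{MaxStab}_\alpha(\tfrac12)$ is attained by dictator functions, i.e. for every $f:\{-1,1\}^n\to\{0,1\}$ with $\mathbb Ef(\mathbf X)=\tfrac12$, $\mathbb E[\Phi_\alpha(T_\rho f(\mathbf X))]\le\tfrac12\Phi_\alpha(\tfrac{1+\rho}{2})+\tfrac12\Phi_\alpha(\tfrac{1-\rho}{2})$.
   Context: $\mathbf X$ uniform on $\{-1,1\}^n$; $\mathbf Y$ obtained by independently flipping each coordinate of $\mathbf X$ with probability $(1-\rho)/2$; $T_\rho f(\mathbf x)=\mathbb E[f(\mathbf Y)\mid\mathbf X=\mathbf x]$. For $\alpha>1$, $\Phi_\alpha(t)=t\cdot\frac{t^{\alpha-1}-1}{\alpha-1}$ on $[0,1]$. $\mathbf{MaxStab}_\alpha(a)$ is the maximum of $\mathbb E[\Phi_\alpha(T_\rho f(\mathbf X))]$ over Boolean $f$ with $\mathbb Ef(\mathbf X)=a$. Dictator functions are $1\{x_k=1\}$, $1\{x_k=-1\}$. For $\alpha\in(1,2)$, $\theta(\alpha)$ is the unique solution $\theta\in(0,1)$ of $\theta^{2-\alpha}+\frac1\alpha(1-\theta)=1$. *)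

(* Defs.v *)
From HB Require Import structures.
From mathcomp Require Import all_boot all_order all_algebra.
From mathcomp Require Import all_classical all_reals all_analysis.
Set Implicit Arguments. Unset Strict Implicit. Unset Printing Implicit Defensive.
Import Order.TTheory GRing.Theory Num.Theory.
Local Open Scope ring_scope.

(* The Boolean cube {-1,1}^n, coordinates encoded as bool (true = +1). *)
Definition cube (n : nat) := {ffun 'I_n -> bool}.

Definition Eunif (R : realType) (n : nat) (g : cube n -> R) : R :=
  (2 ^+ n)^-1 * \sum_(x : cube n) g x.

Definition bval (R : realType) (b : bool) : R := (b : nat)%:R.

(* P[Y = y | X = x]: each coordinate flipped independently w.p. (1-rho)/2. *)
Definition noise_kernel (R : realType) (n : nat) (rho : R) (x y : cube n) : R :=
  \prod_(i < n) (if y i == x i then (1 + rho) / 2 else (1 - rho) / 2).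

Definition T_rho (R : realType) (n : nat) (rho : R) (f : cube n -> bool)
  (x : cube n) : R :=
  \sum_(y : cube n) noise_kernel rho x y * bval R (f y).

Definition Phi (R : realType) (alpha t : R) : R :=
  t * ((t `^ (alpha - 1)) - 1) / (alpha - 1).

Definition is_theta (R : realType) (alpha theta : R) : Prop :=
  0 < theta < 1 /\ theta `^ (2 - alpha) + (1 - theta) / alpha = 1.

(* Main.v *)
Require Import Defs.
From HB Require Import structures.
From mathcomp Require Import all_boot all_order all_algebra.
From mathcomp Require Import all_classical all_reals all_analysis.
From mathcomp Require Import ring lra.
Import Order.TTheory GRing.Theory Num.Theory.
Local Open Scope ring_scope.

Section Fourier.
Variables (R : realType) (n : nat).
Implicit Types (x y z S : cube n) (r : R).

Definition sg (b : bool) : R := if b then 1 else -1.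
Definition chi S x : R := \prod_(i < n) (if S i then sg (x i) else 1).
Definition lam r S : R := \prod_(i < n) (if S i then r else 1).
Definition Fh S (h : cube n -> R) : R := \sum_x h x * chi S x.

Lemma kfac r (a b : bool) :
  (if b == a then (1 + r) / 2 else (1 - r) / 2) = (1 + r * sg a * sg b) / 2.
Proof. by case: a; case: b => /=; rewrite /sg; field. Qed.

Lemma kern_expand r x y :
  noise_kernel r x y = (2 ^+ n)^-1 * \sum_S lam r S * chi S x * chi S y.
Proof.
rewrite /noise_kernel.
under eq_bigr => i _ do rewrite kfac.
rewrite big_split /= prodr_const card_ord exprVn.
rewrite mulrC; congr (_ * _).
have -> : \sum_S lam r S * chi S x * chi S y =
   \sum_(S : {ffun 'I_n -> bool}) \prod_i (if S i then r * sg (x i) * sg (y i) else 1).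
  apply: eq_bigr => S _; rewrite /lam /chi -!big_split /=.
  by apply: eq_bigr => i _; case: (S i); rewrite ?mulr1 ?mulrA.
have := bigA_distr_bigA (fun (i : 'I_n) (b : bool) => if b then r * sg (x i) * sg (y i) else 1).
move=> <-; apply: eq_bigr => i _.
by rewrite big_bool /= addrC.
Qed.


Lemma cube_distr (F : 'I_n -> bool -> R) :
  \sum_(x : cube n) \prod_(i < n) F i (x i) = \prod_(i < n) (F i true + F i false).
Proof.
have := bigA_distr_bigA F; move=> <-; apply: eq_bigr => i _.
by rewrite big_bool.
Qed.

Lemma kern_sum1 r x : \sum_y noise_kernel r x y = 1.
Proof.
rewrite /noise_kernel (cube_distr (fun i b => if b == x i then (1 + r) / 2 else (1 - r) / 2)).
rewrite big1 // => i _; by case: (x i) => /=; field.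
Qed.

Lemma kern_sym r x y : noise_kernel r x y = noise_kernel r y x.
Proof. by apply: eq_bigr => i _; rewrite eq_sym. Qed.

Lemma kern_comp r y z :
  \sum_x noise_kernel r y x * noise_kernel r x z = noise_kernel (r * r) y z.
Proof.
rewrite /noise_kernel.
under eq_bigr => x _ do rewrite -big_split /=.
rewrite (cube_distr (fun i b => (if b == y i then (1 + r) / 2 else (1 - r) / 2) *
   (if z i == b then (1 + r) / 2 else (1 - r) / 2))).
apply: eq_bigr => i _.
by case: (y i); case: (z i) => /=; field.
Qed.

Lemma kern_one x (h : cube n -> R) : \sum_y noise_kernel 1 x y * h y = h x.
Proof.
rewrite (bigD1 x) //= big1 ?addr0.
  have -> : noise_kernel (R:=R) 1 x x = 1.
    by rewrite /noise_kernel; apply: big1 => i _; rewrite eqxx; field.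
  by rewrite mul1r.
move=> y yx.
have [i yi] : exists i, y i != x i.
  apply/existsP; apply: contraR yx => /existsPn H; apply/eqP/ffunP => i.
  by move: (H i); rewrite negbK => /eqP.
by rewrite /noise_kernel (bigD1 i) //= (negbTE yi) subrr mul0r !mul0r.
Qed.

Lemma sum_aux a c b (F : cube n -> R) :
  a * (c * \sum_S F S) * b = c * \sum_S (a * F S * b).
Proof.
rewrite [c * _]mulr_sumr [a * _]mulr_sumr mulr_suml [RHS]mulr_sumr.
by apply: eq_bigr => S _; ring.
Qed.

Lemma quad r (u v : cube n -> R) :
  \sum_x \sum_y u x * noise_kernel r x y * v y =
  (2 ^+ n)^-1 * \sum_S lam r S * Fh S u * Fh S v.
Proof.
under eq_bigr => x _ do under eq_bigr => y _ do rewrite kern_expand sum_aux.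
under eq_bigr => x _ do rewrite -mulr_sumr.
rewrite -mulr_sumr; congr (_ * _).
under eq_bigr => x _ do rewrite exchange_big /=.
rewrite exchange_big /=; apply: eq_bigr => S _.
rewrite /Fh -[RHS]mulrA mulr_suml [RHS]mulr_sumr; apply: eq_bigr => x _.
rewrite mulr_sumr mulr_sumr; apply: eq_bigr => y _.
ring.
Qed.

Lemma lam_sq r S : lam (r * r) S = lam r S * lam r S.
Proof.
rewrite /lam -big_split /=; apply: eq_bigr => i _; by case: (S i); rewrite ?mulr1.
Qed.

Lemma lam0 r : lam r [ffun => false] = 1.
Proof. by rewrite /lam big1 // => i _; rewrite ffunE. Qed.

Lemma lam_bound r S : 0 <= r <= 1 -> S != [ffun => false] -> 0 <= lam r S <= r.
Proof.
move=> /andP[r0 r1] SN.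
have [i Si] : exists i, S i.
  apply/existsP; apply: contraR SN => /existsPn H; apply/eqP/ffunP => i.
  by move: (H i); rewrite ffunE => /negbTE.
have hp : 0 <= \prod_(j < n | j != i) (if S j then r else 1) <= 1.
  apply/andP; split.
    by apply: prodr_ge0 => j _; case: (S j).
  by apply: prodr_ile1 => j _; case: (S j) => //; apply/andP.
rewrite /lam (bigD1 i) // /= Si.
case/andP: hp => h0 h1; apply/andP; split; first exact: mulr_ge0.
by rewrite -[leRHS](mulr1 r) ler_wpM2l.
Qed.

Lemma Fh0 (h : cube n -> R) : Fh [ffun => false] h = \sum_x h x.
Proof.
apply: eq_bigr => x _; rewrite /chi big1 ?mulr1 // => i _; by rewrite ffunE.
Qed.


Lemma lam1 S : lam 1 S = 1.
Proof. by rewrite /lam big1 // => i _; case: (S i). Qed.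

Lemma sumT2 rho (fv : cube n -> R) :
  \sum_x (\sum_y noise_kernel rho x y * fv y) ^+ 2 =
  \sum_y \sum_z fv y * noise_kernel (rho * rho) y z * fv z.
Proof.
under eq_bigr => x _ do rewrite expr2 mulr_suml.
under eq_bigr => x _ do under eq_bigr => y _ do rewrite mulr_sumr.
rewrite exchange_big /=; apply: eq_bigr => y _.
rewrite exchange_big /=; apply: eq_bigr => z _.
rewrite -kern_comp mulr_sumr mulr_suml; apply: eq_bigr => x _.
rewrite (kern_sym rho x y); ring.
Qed.

Lemma spectral (rho c D : R) (fv : cube n -> R) :
  0 <= rho <= 1 -> 0 <= c -> 0 <= c * rho + D ->
  (forall x, fv x * fv x = fv x) ->
  \sum_x fv x = 2 ^+ n / 2 ->
  c * \sum_x (\sum_y noise_kernel rho x y * fv y) ^+ 2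
  + D * \sum_x fv x * (\sum_y noise_kernel rho x y * fv y)
   <= 2 ^+ n * (c * (1 + rho ^+ 2) / 4 + D * (1 + rho) / 4).
Proof.
move=> hr hc hcD hb hsum.
set N : R := 2 ^+ n.
have N0 : 0 < N by rewrite /N exprn_gt0.
rewrite sumT2 quad.
have -> : \sum_x fv x * (\sum_y noise_kernel rho x y * fv y) =
          \sum_x \sum_y fv x * noise_kernel rho x y * fv y.
  by apply: eq_bigr => x _; rewrite mulr_sumr; apply: eq_bigr => y _; rewrite mulrA.
rewrite quad.
have pars : \sum_S Fh S fv ^+ 2 = N * (N / 2).
  have := quad 1 fv fv.
  have -> : \sum_x \sum_y fv x * noise_kernel 1 x y * fv y = \sum_x fv x.
    apply: eq_bigr => x _; rewrite -{2}(hb x) -(kern_one x fv) mulr_sumr.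
    by apply: eq_bigr => y _; rewrite mulrA.
  have -> : \sum_S lam 1 S * Fh S fv * Fh S fv = \sum_S Fh S fv ^+ 2.
    by apply: eq_bigr => S _; rewrite lam1 mul1r expr2.
  rewrite hsum -/N => H.
  by rewrite H mulrA mulfV ?gt_eqF // mul1r.
set S0 : cube n := [ffun => false].
have key : forall S, S != S0 ->
   c * (lam (rho * rho) S * Fh S fv * Fh S fv) + D * (lam rho S * Fh S fv * Fh S fv)
     <= (c * rho ^+ 2 + D * rho) * Fh S fv ^+ 2.
  move=> S SN; have /andP[l0 l1] := @lam_bound rho S hr SN.
  rewrite lam_sq.
  have : c * (lam rho S)^+2 + D * lam rho S <= c * rho ^+ 2 + D * rho.
    have : 0 <= (rho - lam rho S) * (c * (rho + lam rho S) + D).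
      apply: mulr_ge0; first by rewrite subr_ge0.
      by nra.
    by nra.
  move=> h; have F2 : 0 <= Fh S fv ^+ 2 by apply: sqr_ge0.
  have := ler_wpM2r F2 h.
  by rewrite !expr2 => H; nra.
rewrite mulrCA [D * _]mulrCA -mulrDr !mulr_sumr -big_split /=.
rewrite (bigD1 S0) //= !lam0 Fh0 hsum.
rewrite (bigD1 S0) //= Fh0 hsum in pars.
have hrest : \sum_(S | S != S0) Fh S fv ^+ 2 = N * N / 4.
  by apply: (addrI ((N / 2) ^+ 2)); rewrite pars; field.
have Hk : \sum_(S | S != S0) (c * (lam (rho * rho) S * Fh S fv * Fh S fv) +
  D * (lam rho S * Fh S fv * Fh S fv)) <=
  \sum_(S | S != S0) (c * rho ^+ 2 + D * rho) * Fh S fv ^+ 2 by apply: ler_sum.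
rewrite -mulr_sumr hrest in Hk.
rewrite -(ler_pM2l N0) mulrA mulfV ?gt_eqF // mul1r.
set T := \sum_(S | S != S0) _ in Hk *.
rewrite mul1r; apply: le_trans (lerD (lexx _) Hk) _.
by rewrite /N le_eqVlt; apply/orP; left; apply/eqP; field.
Qed.

End Fourier.

Section Anal.
Local Open Scope classical_set_scope.
Local Open Scope ring_scope.
Variable R : realType.

Lemma is_derive_powR (e x : R) : 0 < x ->
  is_derive x 1 (fun y : R => y `^ e) (e * x `^ (e - 1)).
Proof.
move=> x0.
have xi : x \in `]0, +oo[ by rewrite in_itv /= x0.
have := derivableP (@derivable_powR R 1 e x xi).
by rewrite -derive1E powR_derive1.
Qed.

Lemma mono_deriv (f df : R -> R) (a b : R) : a <= b ->
  (forall x, a <= x <= b -> is_derive x 1 f (df x)) ->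
  (forall x, a <= x <= b -> 0 <= df x) -> f a <= f b.
Proof.
move=> ab hd hp.
have hd' : forall x, x \in `]a, b[%R -> is_derive x 1 f (df x).
  move=> x; rewrite in_itv /= => /andP[h1 h2]; apply: hd.
  by rewrite (ltW h1) (ltW h2).
have [c cab Hc] : exists2 c, c \in `[a, b]%R & f b - f a = df c * (b - a).
  apply: (MVT_segment ab hd').
  apply: derivable_within_continuous => x; rewrite in_itv /= => hx.
  have := hd x hx; by case.
rewrite -subr_ge0 Hc; apply: mulr_ge0; last by rewrite subr_ge0.
by apply: hp; move: cab; rewrite in_itv.
Qed.


Lemma deriv_pat (a b k e x : R) : 0 < x ->
  is_derive x 1 (fun y => a * y + b * y ^+ 2 + k * y `^ e)
    (a + b * (2 * x) + k * (e * x `^ (e - 1))).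
Proof.
move=> x0.
have H1 : is_derive x 1 (fun y : R => a * y) a.
  have -> : (fun y : R => a * y) = a \*: (@id R) by apply/funext.
  apply: (is_derive_eq (is_deriveZ a (is_derive_id x 1))).
  by rewrite /GRing.scale /= mulr1.
have H2 : is_derive x 1 (fun y : R => b * y ^+ 2) (b * (2 * x)).
  have -> : (fun y : R => b * y ^+ 2) = b \*: ((@id R) ^+ 2) by apply/funext.
  apply: (is_derive_eq (is_deriveZ b (is_deriveX 2 (is_derive_id x 1)))).
  by rewrite /GRing.scale /= !mulr1 expr1.
have H3 : is_derive x 1 (fun y : R => k * y `^ e) (k * (e * x `^ (e - 1))).
  have -> : (fun y : R => k * y `^ e) = k \*: (fun y : R => y `^ e) by apply/funext.
  apply: (is_derive_eq (is_deriveZ k (is_derive_powR e x x0))).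
  by [].
have -> : (fun y : R => a * y + b * y ^+ 2 + k * y `^ e) =
  ((fun y : R => a * y) + (fun y : R => b * y ^+ 2)) + (fun y : R => k * y `^ e)
  by apply/funext.
apply: is_deriveD => //; exact: is_deriveD.
Qed.


Lemma powR_anti (y e1 e2 : R) : 0 < y -> y <= 1 -> e1 <= e2 -> y `^ e2 <= y `^ e1.
Proof. by move=> y0 y1 e12; apply: ger_powR => //; rewrite y0 y1. Qed.

Lemma powR_le1 (y e : R) : 0 < y -> y <= 1 -> 0 <= e -> y `^ e <= 1.
Proof. by move=> y0 y1 e0; rewrite -(powRr0 y); apply: powR_anti. Qed.

Lemma lipP (g s t : R) : 1 <= g -> 0 < s -> s <= t -> t <= 1 ->
  t `^ g - s `^ g <= g * (t - s).
Proof.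
move=> g1 s0 st t1.
have H := @mono_deriv (fun y => g * y + 0 * y ^+ 2 + (-1) * y `^ g)
  (fun y => g + 0 * (2 * y) + (-1) * (g * y `^ (g - 1))) s t st.
have /H {}H : forall x, s <= x <= t -> is_derive x 1
   (fun y => g * y + 0 * y ^+ 2 + (-1) * y `^ g)
   (g + 0 * (2 * x) + (-1) * (g * x `^ (g - 1))).
  move=> x /andP[sx _]; apply: deriv_pat; exact: lt_le_trans sx.
have /H {}H : forall x, s <= x <= t -> 0 <= g + 0 * (2 * x) + (-1) * (g * x `^ (g - 1)).
  move=> x /andP[sx xt].
  have x0 : 0 < x by exact: lt_le_trans sx.
  have : x `^ (g - 1) <= 1 by apply: powR_le1 => //; [exact: le_trans xt t1 | lra].
  have g0 : 0 <= g by lra.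
  nra.
lra.
Qed.


Lemma taylor2 (al t t0 : R) : 2 <= al -> 0 < t -> t <= 1 -> 0 < t0 -> t0 <= 1 ->
  t `^ al <= t0 `^ al + al * t0 `^ (al - 1) * (t - t0)
             + (al * (al - 1) / 2) * (t - t0) ^+ 2.
Proof.
move=> al2 t0' t1 s0 s1.
set c := al * (al - 1) / 2.
set A := al * t0 `^ (al - 1) - 2 * c * t0.
have g1 : 1 <= al - 1 by lra.
have al0 : 0 <= al by lra.
have iden : t0 `^ al + al * t0 `^ (al - 1) * (t - t0) + c * (t - t0) ^+ 2 - t `^ al
   = (A * t + c * t ^+ 2 + (-1) * t `^ al) - (A * t0 + c * t0 ^+ 2 + (-1) * t0 `^ al).
  by rewrite /A; ring.
rewrite -subr_ge0 iden subr_ge0.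
have [st|ts] := lerP t0 t.
  have H := @mono_deriv (fun y => A * y + c * y ^+ 2 + (-1) * y `^ al)
    (fun y => A + c * (2 * y) + (-1) * (al * y `^ (al - 1))) t0 t st.
  apply: H.
    move=> x /andP[sx _]; apply: deriv_pat; exact: lt_le_trans sx.
  move=> x /andP[sx xt].
  have x0 : 0 < x by exact: lt_le_trans sx.
  have L := @lipP (al - 1) t0 x g1 s0 sx (le_trans xt t1).
  have := ler_wpM2l al0 L.
  rewrite /A /c; nra.
have H := @mono_deriv (fun y => (- A) * y + (- c) * y ^+ 2 + 1 * y `^ al)
    (fun y => (- A) + (- c) * (2 * y) + 1 * (al * y `^ (al - 1))) t t0 (ltW ts).
suff : (- A) * t + (- c) * t ^+ 2 + 1 * t `^ al <= (- A) * t0 + (- c) * t0 ^+ 2 + 1 * t0 `^ al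
  by lra.
apply: H.
  move=> x /andP[sx _]; apply: deriv_pat; exact: lt_le_trans sx.
move=> x /andP[sx xt].
have x0 : 0 < x by exact: lt_le_trans sx.
have L := @lipP (al - 1) x t0 g1 x0 xt s1.
have := ler_wpM2l al0 L.
rewrite /A /c; nra.
Qed.


Lemma level2 (al q p : R) : 2 <= al <= 3 -> 0 < q -> q <= p -> p <= 1 ->
  (al - 1) / 2 * (p ^+ 2 - q ^+ 2) <= p `^ (al - 1) - q `^ (al - 1).
Proof.
move=> /andP[a2 a3] q0 qp p1.
set g := al - 1.
have H := @mono_deriv (fun y => 0 * y + (- (g / 2)) * y ^+ 2 + 1 * y `^ g)
  (fun y => 0 + (- (g / 2)) * (2 * y) + 1 * (g * y `^ (g - 1))) q p qp.
suff : 0 * q + (- (g / 2)) * q ^+ 2 + 1 * q `^ g <= 0 * p + (- (g / 2)) * p ^+ 2 + 1 * p `^ g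
  by rewrite /g; lra.
apply: H.
  move=> x /andP[sx _]; apply: deriv_pat; exact: lt_le_trans sx.
move=> x /andP[sx xt].
have x0 : 0 < x by exact: lt_le_trans sx.
have : x `^ 1 <= x `^ (g - 1).
  apply: powR_anti => //; [exact: le_trans xt p1 | rewrite /g; lra].
rewrite powRr1; last exact: ltW x0. move=> h.
have g0 : 0 <= g by rewrite /g; lra.
nra.
Qed.

Lemma amgm (al u : R) : 1 < al < 2 -> 0 <= u ->
  u `^ al <= (al - 1) * u ^+ 2 + (2 - al) * u.
Proof.
move=> /andP[a1 a2] u0.
have p0 : 0 < (al - 1)^-1 by rewrite invr_gt0; lra.
have q0 : 0 < (2 - al)^-1 by rewrite invr_gt0; lra.
have pq : ((al - 1)^-1)^-1 + ((2 - al)^-1)^-1 = 1 by rewrite !invrK; ring.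
have := conjugate_powR (powR_ge0 u (2 * (al - 1))) (powR_ge0 u (2 - al)) p0 q0 pq.
rewrite -!powRrM.
have -> : 2 * (al - 1) * (al - 1)^-1 = 2%:R by field; lra.
have -> : (2 - al) * (2 - al)^-1 = 1 by field; lra.
rewrite powR_mulrn // powRr1 // !invrK -powRD; last first.
  by apply/implyP => /eqP h; exfalso; lra.
have -> : 2 * (al - 1) + (2 - al) = al by ring.
lra.
Qed.

Lemma quadbound1 (al t t0 : R) : 1 < al < 2 -> 0 <= t -> 0 < t0 ->
  t `^ al <= t0 `^ al + al * t0 `^ (al - 1) * (t - t0)
            + (al - 1) * t0 `^ (al - 2) * (t - t0) ^+ 2.
Proof.
move=> ha t0' s0.
set u := t / t0.
have u0 : 0 <= u by rewrite /u divr_ge0 // ltW.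
have tu : t = t0 * u by rewrite /u mulrC divfK // gt_eqF.
have P0 : 0 < t0 `^ al by rewrite powR_gt0.
have e1 : t0 `^ (al - 1) = t0 `^ al / t0.
  rewrite powRB ?powRr1 ?ltW //; apply/implyP => _; by rewrite gt_eqF.
have e2 : t0 `^ (al - 2) = t0 `^ al / t0 ^+ 2.
  rewrite -(powR_mulrn _ (ltW s0)) powRB //; apply/implyP => _; by rewrite gt_eqF.
rewrite e1 e2 {1}tu (powRM _ (ltW s0) u0).
have := @amgm al u ha u0.
move=> h.
have := ler_wpM2l (ltW P0) h.
have -> : t0 `^ al + al * (t0 `^ al / t0) * (t - t0) + (al - 1) * (t0 `^ al / t0 ^+ 2) * (t - t0) ^+ 2
   = t0 `^ al * ((al - 1) * u ^+ 2 + (2 - al) * u).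
  rewrite tu; field; by rewrite gt_eqF.
by [].
Qed.

Lemma chord (s th y : R) : 0 < s < 1 -> 0 < th < 1 -> th <= y -> y <= 1 ->
  (1 - y) / (1 - th) * th `^ s + (1 - (1 - y) / (1 - th)) <= y `^ s.
Proof.
move=> /andP[s0 s1] /andP[t0 t1] ty y1.
set l := (1 - y) / (1 - th).
have l0 : 0 <= l by rewrite /l divr_ge0 //; lra.
have l1 : l <= 1 by rewrite /l ler_pdivrMr; lra.
have P1 : 1 <= s^-1 by rewrite invf_ge1 //; lra.
have A0 : th `^ s \in `[0, +oo[%classic by rewrite inE /= in_itv /= powR_ge0.
have B0 : (1 : R) \in `[0, +oo[%classic by rewrite inE /= in_itv /= ler01.
have := @convex_powR R _ P1 (Itv01 l0 l1) _ _ A0 B0.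
rewrite [X in X `^ _ <= _]convRE /=.
have o1 : forall x : R, 1 `^ x = 1 by move=> x; rewrite /powR oner_eq0 ln1 mulr0 expR0.
rewrite [X in _ <= X]convRE /= /unstable.onem -powRrM mulfV ?gt_eqF // powRr1; last exact: ltW.
rewrite o1 !mulr1.
set X := l * th `^ s + (1 - l).
move=> h.
have X0 : 0 <= X by rewrite /X; apply: addr_ge0; [apply: mulr_ge0 => //; exact: powR_ge0 | lra].
have hy : X `^ s^-1 <= y by apply: le_trans h _; rewrite /l le_eqVlt; apply/orP; left; apply/eqP; field; lra.
have := @ge0_ler_powR R s (ltW s0) _ _ (powR_ge0 X s^-1) (le_trans (powR_ge0 X s^-1) hy) hy.
by rewrite -powRrM mulVf ?gt_eqF // powRr1.
Qed.



Lemma powR_m1 (x e : R) : 0 < x -> x `^ e = x * x `^ (e - 1).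
Proof.
move=> x0.
have -> : x * x `^ (e - 1) = x `^ 1 * x `^ (e - 1) by rewrite powRr1 // ltW.
rewrite -powRD; last by apply/implyP => _; rewrite gt_eqF.
by congr (_ `^ _); ring.
Qed.

Lemma level1 (al th rho : R) : 1 < al < 2 -> 0 < th < 1 ->
  th `^ (2 - al) + (1 - th) / al = 1 -> 0 <= rho -> rho <= (1 - th) / (1 + th) ->
  (al - 1) * ((1 - rho) / 2) `^ (al - 2) * rho
    <= al * (((1 + rho) / 2) `^ (al - 1) - ((1 - rho) / 2) `^ (al - 1)).
Proof.
move=> ha ht eth r0 rth.
case/andP: ha => a1 a2; case/andP: ht => t0 t1.
set p := (1 + rho) / 2; set q := (1 - rho) / 2.
have rth' : rho * (1 + th) <= 1 - th by rewrite -ler_pdivlMr //; lra.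
have p0 : 0 < p by rewrite /p; lra.
have q0 : 0 < q by rewrite /q; nra.
set y := q / p.
have qy : q = y * p by rewrite /y divfK // gt_eqF.
have ty : th <= y by rewrite /y ler_pdivlMr // /p /q; nra.
have y1 : y <= 1 by rewrite /y ler_pdivrMr // /p /q; lra.
have y0 : 0 < y by exact: lt_le_trans t0 ty.
set Y := y `^ (2 - al).
have Y0 : 0 < Y by rewrite /Y powR_gt0.
have hY : 1 - (1 - y) / al <= Y.
  have := @chord (2 - al) th y.
  have -> : th `^ (2 - al) = 1 - (1 - th) / al by lra.
  have -> : (1 - y) / (1 - th) * (1 - (1 - th) / al) + (1 - (1 - y) / (1 - th))
      = 1 - (1 - y) / al by field; apply/andP; split; rewrite ?gt_eqF //; lra.
  apply; rewrite ?t0 ?t1 //; apply/andP; split; lra.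
set P2 := p `^ (al - 2).
have P20 : 0 < P2 by rewrite /P2 powR_gt0.
have eq1 : q `^ (al - 2) = Y^-1 * P2.
  rewrite qy powRM ?(ltW y0) ?(ltW p0) //.
  by rewrite /Y -powRN opprB.
have e21 : al - 1 - 1 = al - 2 by ring.
have eq2 : q `^ (al - 1) = y * Y^-1 * (p * P2).
  rewrite qy powRM ?(ltW y0) ?(ltW p0) // (@powR_m1 y (al - 1) y0) (@powR_m1 p (al - 1) p0) e21.
  by rewrite /Y -powRN opprB /P2; ring.
have eq3 : p `^ (al - 1) = p * P2 by rewrite (@powR_m1 p (al - 1) p0) e21.
rewrite eq1 eq2 eq3.
have hr : rho = p - y * p by rewrite -qy /p /q; field.
rewrite -subr_ge0.
have -> : al * (p * P2 - y * Y^-1 * (p * P2)) - (al - 1) * (Y^-1 * P2) * rho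
   = p * P2 * Y^-1 * (al * (Y - y) - (al - 1) * (1 - y)).
  by rewrite hr; field; rewrite gt_eqF.
apply: mulr_ge0; first by apply: mulr_ge0; [apply: mulr_ge0; exact: ltW | rewrite invr_ge0; exact: ltW].
have : al * (1 - (1 - y) / al) <= al * Y by rewrite ler_pM2l //; lra.
have -> : al * (1 - (1 - y) / al) = al - 1 + y by field; rewrite gt_eqF //; lra.
lra.
Qed.

Lemma pw1 (al t t0 q : R) : 1 < al < 2 -> 0 < q -> q <= t0 -> 0 <= t ->
  t `^ al <= t0 `^ al + al * t0 `^ (al - 1) * (t - t0)
            + (al - 1) * q `^ (al - 2) * (t - t0) ^+ 2.
Proof.
move=> ha q0 qt t0'.
have s0 : 0 < t0 by exact: lt_le_trans qt.
have H := @quadbound1 al t t0 ha t0' s0.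
apply: le_trans H _; rewrite lerD2l.
apply: ler_wpM2r; first exact: sqr_ge0.
case/andP: ha => a1 a2.
apply: ler_wpM2l; first lra.
have e : forall x : R, x `^ (al - 2) = (x `^ (2 - al))^-1.
  by move=> x; rewrite -powRN opprB.
rewrite !e; rewrite lef_pV2 ?posrE ?powR_gt0 //.
apply: ge0_ler_powR => //; [lra | rewrite nnegrE; exact: ltW | rewrite nnegrE; exact: ltW].
Qed.

Lemma pw2 (al t t0 : R) : 2 <= al <= 3 -> 0 <= t <= 1 -> 0 <= t0 <= 1 ->
  t `^ al <= t0 `^ al + al * t0 `^ (al - 1) * (t - t0)
             + (al * (al - 1) / 2) * (t - t0) ^+ 2.
Proof.
move=> /andP[a2 a3] /andP[tl tu] /andP[sl su].
have c1 : 1 <= al * (al - 1) / 2 by nra.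
have sq : forall x : R, 0 < x -> x <= 1 -> x `^ al <= x ^+ 2.
  move=> x x0 x1; rewrite -(powR_mulrn 2 (ltW x0)); exact: powR_anti.
have z : forall e : R, e != 0 -> (0 : R) `^ e = 0 by move=> e e0; rewrite powR0.
have al0 : al != 0 by rewrite gt_eqF //; lra.
have al10 : al - 1 != 0 by rewrite gt_eqF //; lra.
case: (ltrgt0P t) => [t0'||te]; last 2 first.
- by move: tl; rewrite leNgt => /negP.
- rewrite te z // sub0r.
  case: (ltrgt0P t0) => [s0||se]; last 2 first.
  + by move: sl; rewrite leNgt => /negP.
  + rewrite se z // z //; nra.
  have := sq t0 s0 su.
  have P : 0 <= t0 `^ al by exact: powR_ge0.
  have -> : t0 `^ (al - 1) = t0 `^ al / t0.
    by rewrite (@powR_m1 t0 al s0); field; rewrite gt_eqF.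
  have -> : al * (t0 `^ al / t0) * - t0 = - al * t0 `^ al by field; rewrite gt_eqF.
  move=> h; have h1 := mulr_ge0 (x := al - 1) (y := t0 ^+ 2 - t0 `^ al) ltac:(lra) ltac:(lra).
  have h2 : 0 <= (al - 1) * (al - 2) * t0 ^+ 2 by apply: mulr_ge0; [nra|exact: sqr_ge0].
  rewrite sqrrN; nra.
case: (ltrgt0P t0) => [s0||se]; last 2 first.
- by move: sl; rewrite leNgt => /negP.
- rewrite se z // z // mulr0 mul0r !add0r subr0.
  have := sq t t0' tu; have := sqr_ge0 t; nra.
exact: taylor2.
Qed.

End Anal.

Section Finish.
Variables (R : realType) (n : nat).

Lemma card_cube : #|{: cube n}| = (2 ^ n)%N.
Proof. by rewrite card_ffun card_bool card_ord. Qed.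

Lemma finish (rho c pp pq dp dq : R) (f : cube n -> bool) (h : cube n -> R) :
  0 <= rho <= 1 -> 0 <= c -> c * rho <= dp - dq ->
  \sum_x bval R (f x) = 2 ^+ n / 2 ->
  (forall x, h x <= (if f x then
      pp + dp * (T_rho rho f x - (1 + rho) / 2) + c * (T_rho rho f x - (1 + rho) / 2) ^+ 2
    else pq + dq * (T_rho rho f x - (1 - rho) / 2) + c * (T_rho rho f x - (1 - rho) / 2) ^+ 2)) ->
  \sum_x h x <= 2 ^+ n * (pp / 2 + pq / 2).
Proof.
move=> hr hc hlev hsum hpw.
set p := (1 + rho) / 2; set q := (1 - rho) / 2.
set fv := fun x => bval R (f x).
set g := fun x => T_rho rho f x.
set A0 := pq - dq * q + c * q ^+ 2.
set B0 := dq - 2 * c * q.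
set K1 := pp - dp * p + c * p ^+ 2 - A0.
set D := dp - dq - 2 * c * rho.
have hpw' : forall x, h x <= A0 + B0 * g x + (c * g x ^+ 2 + D * (fv x * g x)) + K1 * fv x.
  move=> x; apply: le_trans (hpw x) _; rewrite /fv /bval /g /K1 /A0 /B0 /D /p /q.
  by case: (f x) => /=; rewrite le_eqVlt; apply/orP; left; apply/eqP; field.
apply: le_trans (ler_sum _ (fun x _ => hpw' x)) _.
have sumE : forall a b k d : R,
  \sum_x (a + b * g x + (c * g x ^+ 2 + d * (fv x * g x)) + k * fv x)
  = 2 ^+ n * a + b * \sum_x g x + (c * \sum_x g x ^+ 2 + d * \sum_x fv x * g x)
    + k * \sum_x fv x.
  move=> a b k d; rewrite !big_split /= -!mulr_sumr sumr_const card_cube.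
  by rewrite -[a *+ _]mulr_natl natrX.
rewrite sumE.
have hg : \sum_x g x = 2 ^+ n / 2.
  rewrite /g /T_rho exchange_big /= -hsum; apply: eq_bigr => y _.
  rewrite -mulr_suml.
  under eq_bigr => x _ do rewrite kern_sym.
  by rewrite kern_sum1 mul1r.
have hb : forall x, fv x * fv x = fv x by move=> x; rewrite /fv /bval; case: (f x); rewrite /= ?mulr1 ?mulr0.
have hcD : 0 <= c * rho + D by rewrite /D; lra.
have sp := @spectral R n rho c D fv hr hc hcD hb hsum.
rewrite hg hsum.
apply: le_trans (lerD (lerD (lexx _) sp) (lexx _)) _.
rewrite le_eqVlt; apply/orP; left; apply/eqP.
by rewrite /K1 /A0 /B0 /D /p /q; field.
Qed.


Lemma Tsum (rho : R) (f : cube n -> bool) :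
  \sum_x T_rho rho f x = \sum_x bval R (f x).
Proof.
rewrite /T_rho exchange_big /=; apply: eq_bigr => y _.
rewrite -mulr_suml.
under eq_bigr => x _ do rewrite kern_sym.
by rewrite kern_sum1 mul1r.
Qed.

Lemma Tbound (rho : R) (f : cube n -> bool) x : 0 <= rho <= 1 ->
  0 <= T_rho rho f x <= 1.
Proof.
move=> /andP[r0 r1].
have K0 : forall y, 0 <= noise_kernel rho x y.
  move=> y; apply: prodr_ge0 => i _; case: (_ == _); apply: divr_ge0; lra.
have b01 : forall y, 0 <= bval R (f y) <= 1 by move=> y; rewrite /bval; case: (f y) => /=; lra.
apply/andP; split.
  apply: sumr_ge0 => y _; apply: mulr_ge0 => //; by case/andP: (b01 y).
rewrite -(@kern_sum1 R n rho x); apply: ler_sum => y _.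
rewrite -[leRHS]mulr1; apply: ler_wpM2l => //; by case/andP: (b01 y).
Qed.

End Finish.

Theorem corollary2p7 (R : realType) (n : nat) (rho alpha : R) :
  (1 <= n)%N ->
  ((1 < alpha < 2 /\ 0 <= rho /\
      (exists theta, is_theta alpha theta /\ rho <= (1 - theta) / (1 + theta)))
   \/ (2 <= alpha <= 3 /\ 0 <= rho <= 1)) ->
  forall f : cube n -> bool,
    Eunif (fun x => bval R (f x)) = 1 / 2 ->
    Eunif (fun x => Phi alpha (T_rho rho f x))
      <= 1 / 2 * Phi alpha ((1 + rho) / 2) + 1 / 2 * Phi alpha ((1 - rho) / 2).
Proof.
move=> _ hyp f hmean.
have N0 : 0 < (2 : R) ^+ n by rewrite exprn_gt0.
have hsum : \sum_x bval R (f x) = 2 ^+ n / 2.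
  move: hmean; rewrite /Eunif => h.
  have -> : \sum_x bval R (f x) = 2 ^+ n * ((2 ^+ n)^-1 * \sum_x bval R (f x)).
    by rewrite mulrA mulfV ?gt_eqF // mul1r.
  by rewrite h div1r.
have hr : 0 <= rho <= 1.
  case: hyp => [[_ [r0 [th [[/andP[t0 t1] _] rt]]]]|[_ //]].
  rewrite r0 /=; apply: le_trans rt _; rewrite ler_pdivrMr; lra.
have al1 : 1 < alpha by case: hyp => [[/andP[a1 _] _]|[/andP[a2 _] _]] //; lra.
set p := (1 + rho) / 2; set q := (1 - rho) / 2.
have PhiE : forall t, 0 <= t -> Phi alpha t = (t `^ alpha - t) / (alpha - 1).
  by move=> t t0; rewrite /Phi mulrBr mulr1 mulr_powRB1 //; lra.
set g := fun x => T_rho rho f x.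
have gb : forall x, 0 <= g x <= 1 by move=> x; exact: Tbound.
suff key : \sum_x (g x) `^ alpha <= 2 ^+ n * (p `^ alpha / 2 + q `^ alpha / 2).
  rewrite /Eunif.
  have -> : \sum_x Phi alpha (T_rho rho f x) = (\sum_x (g x) `^ alpha - \sum_x g x) / (alpha - 1).
    rewrite -sumrB mulr_suml; apply: eq_bigr => x _; apply: PhiE.
    by case/andP: (gb x).
  rewrite /g Tsum hsum -/g.
  have p0 : 0 <= p by rewrite /p; lra.
  have q0 : 0 <= q by rewrite /q; lra.
  rewrite !PhiE //.
  set S := \sum_x _ in key *.
  have a0 : 0 < alpha - 1 by lra.
  have -> : (2 ^+ n)^-1 * ((S - 2 ^+ n / 2) / (alpha - 1)) = ((2 ^+ n)^-1 * S - 1 / 2) / (alpha - 1).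
    by field; rewrite !gt_eqF.
  have -> : 1 / 2 * ((p `^ alpha - p) / (alpha - 1)) + 1 / 2 * ((q `^ alpha - q) / (alpha - 1))
     = ((p `^ alpha / 2 + q `^ alpha / 2) - 1 / 2) / (alpha - 1).
    by rewrite /p /q; field; rewrite gt_eqF.
  rewrite ler_pM2r ?invr_gt0 // lerD2r ler_pdivrMl //.
have p0 : 0 < p by rewrite /p; lra.
have qp : q <= p by rewrite /q /p; lra.
case: hyp => [[ha [r0 [th [[ht eth] rt]]]]|[ha _]].
- case/andP: (ha) => a1 a2; case/andP: (ht) => t0 t1.
  have q0 : 0 < q.
    have : rho < 1 by apply: le_lt_trans rt _; rewrite ltr_pdivrMr; lra.
    by rewrite /q; lra.
  have hc : 0 <= (alpha - 1) * q `^ (alpha - 2) by apply: mulr_ge0; [lra|exact: powR_ge0].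
  apply: (@finish R n rho ((alpha - 1) * q `^ (alpha - 2)) (p `^ alpha) (q `^ alpha)
     (alpha * p `^ (alpha - 1)) (alpha * q `^ (alpha - 1)) f (fun x => g x `^ alpha) hr hc _ hsum).
    by rewrite -mulrBr; exact: (@level1 R alpha th rho ha ht eth r0 rt).
  move=> x; have /andP[gx0 _] := gb x.
  case: (f x).
    exact: (@pw1 R alpha (g x) p q ha q0 qp gx0).
  exact: (@pw1 R alpha (g x) q q ha q0 (lexx q) gx0).
- case/andP: (ha) => a2 a3.
  have hc : 0 <= alpha * (alpha - 1) / 2 by apply: divr_ge0; [nra|lra].
  apply: (@finish R n rho (alpha * (alpha - 1) / 2) (p `^ alpha) (q `^ alpha)
     (alpha * p `^ (alpha - 1)) (alpha * q `^ (alpha - 1)) f (fun x => g x `^ alpha) hr hc _ hsum).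
    rewrite -mulrBr.
    have p1 : p <= 1 by rewrite /p; case/andP: hr => *; lra.
    have qge : 0 <= q by rewrite /q; case/andP: hr => *; lra.
    move: qge; rewrite le_eqVlt => /orP[/eqP q0|q0].
      have r1 : rho = 1 by move: q0; rewrite /q; lra.
      have pe : p = 1 by rewrite /p r1; field.
      rewrite -q0 pe powR0 ?powR1 //; last by rewrite gt_eqF //; lra.
      rewrite r1 subr0 mulr1; nra.
    have := @level2 R alpha q p ha q0 qp p1.
    have -> : p ^+ 2 - q ^+ 2 = rho by rewrite /p /q; field.
    move=> h; have := ler_wpM2l (ltW (lt_le_trans ltr01 (ltW al1))) h.
    by rewrite /=; nra.
  move=> x; have gx := gb x.
  have pb : 0 <= p <= 1 by rewrite /p; case/andP: hr => *; apply/andP; split; lra.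
  have qb : 0 <= q <= 1 by rewrite /q; case/andP: hr => *; apply/andP; split; lra.
  by case: (f x); apply: pw2.
Qed.
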